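(* Let $K\subset\mathbb{R}^n$ be a closed convex set and $\sigma>0$. For any fixed constants $C_1,C_2>0$ define $\varepsilon^\dagger=\sup\{\varepsilon>0:\varepsilon^2/\sigma^2\le C_1\log M^{\mathrm{loc}}(C_2\varepsilon)\}$. Then $\varepsilon^*\asymp\varepsilon^\dagger$, where $\varepsilon^*=\sup\{\varepsilon:\varepsilon^2/\sigma^2\le\log M^{\mathrm{loc}}(\varepsilon)\}$.
   Context: $M(\eta,T)$ is the maximal cardinality of a subset of $T$ with pairwise Euclidean distances $>\eta$; $M^{\mathrm{loc}}(\varepsilon)=\sup_{\theta\in K}M(\varepsilon/c^*,B(\theta,\varepsilon)\cap K)$, where $B$ is the closed Euclidean ball and $c^*$ a fixed sufficiently large absolute constant. $\asymp$ hides constants depending only on $C_1,C_2$. *)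

(* Defs.v *)
From HB Require Import structures.
From mathcomp Require Import all_boot all_order all_algebra.
From mathcomp Require Import all_classical all_reals all_analysis.
Set Implicit Arguments. Unset Strict Implicit. Unset Printing Implicit Defensive.
Import Order.TTheory GRing.Theory Num.Theory.
Local Open Scope classical_set_scope.
Local Open Scope ring_scope.

Definition edist {R : realType} {n : nat} (x y : 'M[R]_(1, n)) : R :=
  Num.sqrt (\sum_(i < n) (x ord0 i - y ord0 i) ^+ 2).

Definition eball {R : realType} {n : nat} (theta : 'M[R]_(1, n)) (r : R) : set 'M[R]_(1, n) :=
  [set x | edist theta x <= r].

Definition convex_set {R : realType} {n : nat} (K : set 'M[R]_(1, n)) : Prop :=
  forall x y, K x -> K y -> forall t : R, 0 <= t -> t <= 1 ->
    K (t *: x + (1 - t) *: y).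

Definition packing_set {R : realType} {n : nat} (eta : R) (T : set 'M[R]_(1, n))
  (s : seq 'M[R]_(1, n)) : Prop :=
  uniq s /\ (forall x, x \in s -> T x) /\ pairwise (fun x y => eta < edist x y) s.

Definition packingM {R : realType} {n : nat} (eta : R) (T : set 'M[R]_(1, n)) : R :=
  sup [set (size s)%:R | s in packing_set eta T].

Definition Mloc {R : realType} {n : nat} (cstar : R) (K : set 'M[R]_(1, n)) (eps : R) : R :=
  sup [set packingM (eps / cstar) (eball theta eps `&` K) | theta in K].

Definition eps_star {R : realType} {n : nat} (cstar : R) (K : set 'M[R]_(1, n)) (sigma : R) : R :=
  sup [set e : R | 0 < e /\ e ^+ 2 / sigma ^+ 2 <= ln (Mloc cstar K e)].

Definition eps_dagger {R : realType} {n : nat} (cstar : R) (K : set 'M[R]_(1, n))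
  (sigma C1 C2 : R) : R :=
  sup [set e : R | 0 < e /\ e ^+ 2 / sigma ^+ 2 <= C1 * ln (Mloc cstar K (C2 * e))].

(* K is closed in R^n (product topology on matrices over R, which coincides
   with the Euclidean topology); R^o carries the canonical topology of R. *)
Definition closed_set {R : realType} {n : nat} (K : set 'M[R]_(1, n)) : Prop :=
  closed (K : set 'M[R^o]_(1, n)).

(* Main.v *)
From Pilot Require Import Defs.
From HB Require Import structures.
From mathcomp Require Import all_boot all_order all_algebra.
From mathcomp Require Import all_classical all_reals all_analysis.
From mathcomp Require Import ring lra.
Import Order.TTheory GRing.Theory Num.Theory.
Local Open Scope classical_set_scope.
Local Open Scope ring_scope.
Set Implicit Arguments. Unset Strict Implicit.

Section Abstract.
Variable R : realType.

Lemma sup_ge0 (S : set R) : (forall e, S e -> 0 < e) -> 0 <= sup S.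
Proof.
move=> Hpos; have [hs|nhs] := pselect (has_sup S); last by rewrite sup_out.
case: (hs) => [[e Se] _]; apply: (le_trans (ltW (Hpos _ Se))).
exact: sup_upper_bound.
Qed.

Lemma sup_scale_le (S1 S2 : set R) (t : R) : 0 < t ->
  (forall e, S2 e -> 0 < e) -> has_ubound S2 ->
  (forall e, S1 e -> S2 (t * e)) -> t * sup S1 <= sup S2.
Proof.
move=> t0 Hpos hub Hmap.
have [[e S1e]|S10] := pselect (S1 !=set0); last first.
  have -> : S1 = set0 by apply/seteqP; split=> x // Hx; apply: S10; exists x.
  by rewrite sup0 mulr0; apply: sup_ge0.
rewrite mulrC -ler_pdivlMr //; apply: ge_sup; first by exists e.
move=> x S1x; rewrite ler_pdivlMr // mulrC.
apply: sup_upper_bound; last exact: Hmap.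
by split=> //; exists (t * x); apply: Hmap.
Qed.

Definition epsset (f : R -> R) (sigma a b : R) :=
  [set e : R | 0 < e /\ e ^+ 2 / sigma ^+ 2 <= a * f (b * e)].

Lemma epsset_bounded (f : R -> R) sigma a b : 0 < sigma -> 0 < a -> 0 < b ->
  (forall x y, 0 < x -> x <= y -> f y <= f x) ->
  has_ubound (epsset f sigma a b).
Proof.
move=> s0 a0 b0 mono.
exists (1 + b^-1 + sigma ^+ 2 * a * `|f 1|) => e [e0 He].
have hp : 0 <= sigma ^+ 2 * a * `|f 1| by rewrite mulr_ge0 // mulr_ge0 // ltW // exprn_gt0.
have [le1|gt1] := leP e (1 + b^-1); first by apply: (le_trans le1); rewrite lerDl.
have e1 : 1 <= e by apply: le_trans (ltW gt1); rewrite lerDl invr_ge0 ltW.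
have be1 : 1 <= b * e.
  by rewrite -ler_pdivrMl // mulrC mul1r; apply: le_trans (ltW gt1); rewrite lerDr.
have : e ^+ 2 / sigma ^+ 2 <= a * f 1.
  apply: le_trans He _; rewrite ler_pM2l //; exact: mono.
rewrite ler_pdivrMr ?exprn_gt0 // => H.
apply: le_trans (_ : e ^+ 2 <= _); first by rewrite expr2 ler_peMr // (le_trans ler01).
apply: le_trans H _; apply: le_trans (_ : sigma ^+ 2 * a * `|f 1| <= _); last by rewrite lerDr addr_ge0 // invr_ge0 ltW.
rewrite [_ * sigma ^+ 2]mulrC mulrA ler_pM2l ?mulr_gt0 ?exprn_gt0 //.
exact: ler_norm.
Qed.

Lemma epsset_pos f sigma a b e : epsset f sigma a b e -> 0 < e.
Proof. by case. Qed.

End Abstract.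

Section Compare.
Variable R : realType.
Variables (f : R -> R) (sigma C1 C2 : R).
Hypothesis s0 : 0 < sigma.
Hypothesis C10 : 0 < C1.
Hypothesis C20 : 0 < C2.
Hypothesis mono : forall x y, 0 < x -> x <= y -> f y <= f x.

Definition t1 := Num.min C2^-1 (Num.min 1 C1).
Definition t2 := Num.min C2 (Num.min 1 C1^-1).

Lemma t1_gt0 : 0 < t1.
Proof. by rewrite /t1 !lt_min invr_gt0 C20 ltr01 C10. Qed.
Lemma t2_gt0 : 0 < t2.
Proof. by rewrite /t2 !lt_min invr_gt0 C20 ltr01 C10. Qed.

Lemma sqr_le_of (t a : R) : 0 < t -> t <= 1 -> t <= a -> t ^+ 2 <= a.
Proof. by move=> t0 t1' ta; apply: le_trans ta; rewrite expr2 ler_piMr // ltW. Qed.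

Lemma compare1 : t1 * sup (epsset f sigma 1 1) <= sup (epsset f sigma C1 C2).
Proof.
have tp := t1_gt0.
apply: sup_scale_le => //; first exact: epsset_pos.
  exact: epsset_bounded.
move=> e [e0 He]; rewrite mul1r mul1r in He.
have s2 : 0 < sigma ^+ 2 by rewrite exprn_gt0.
have fe : 0 < f e by apply: lt_le_trans He; rewrite divr_gt0 // exprn_gt0.
split; first by rewrite mulr_gt0.
have ht2 : t1 ^+ 2 <= C1.
  apply: sqr_le_of => //; rewrite /t1.
    by rewrite ge_min; apply/orP; right; rewrite ge_min lexx.
  by rewrite ge_min; apply/orP; right; rewrite ge_min lexx orbT.
rewrite exprMn -mulrA; apply: le_trans (_ : t1 ^+ 2 * f e <= _).
  by rewrite ler_pM2l // exprn_gt0.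
apply: le_trans (_ : C1 * f e <= _); first by rewrite ler_pM2r.
rewrite ler_pM2l //; apply: mono; first by rewrite !mulr_gt0.
rewrite mulrA -[X in _ <= X]mul1r ler_pM2r // -ler_pdivlMl // mulr1.
by rewrite /t1 ge_min lexx.
Qed.

Lemma compare2 : t2 * sup (epsset f sigma C1 C2) <= sup (epsset f sigma 1 1).
Proof.
have tp := t2_gt0.
apply: sup_scale_le => //; first exact: epsset_pos.
  exact: epsset_bounded.
move=> e [e0 He].
have s2 : 0 < sigma ^+ 2 by rewrite exprn_gt0.
split; first by rewrite mulr_gt0.
rewrite !mul1r.
have ht2 : t2 ^+ 2 <= C1^-1.
  apply: sqr_le_of => //; rewrite /t2.
    by rewrite ge_min; apply/orP; right; rewrite ge_min lexx.
  by rewrite ge_min; apply/orP; right; rewrite ge_min lexx orbT.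
have H1 : f (C2 * e) <= f (t2 * e).
  apply: mono; first by rewrite mulr_gt0.
  by rewrite ler_pM2r // /t2 ge_min lexx.
apply: le_trans H1; rewrite -(ler_pM2l C10); apply: le_trans He.
have -> : C1 * ((t2 * e) ^+ 2 / sigma ^+ 2) = (C1 * t2 ^+ 2) * (e ^+ 2 / sigma ^+ 2).
  by rewrite exprMn; ring.
rewrite -[X in _ <= X]mul1r ler_pM2r ?divr_gt0 ?exprn_gt0 //.
by rewrite mulrC -ler_pdivlMr // div1r.
Qed.

End Compare.
Import Pilot.Defs.
Lemma pairwise_sym (T : eqType) (r : rel T) (s : seq T) : symmetric r ->
  pairwise r s -> {in s &, forall x y, x != y -> r x y}.
Proof.
move=> rs; elim: s => // z s IH /= /andP[/allP az ps] x y.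
rewrite !inE => /orP[/eqP->|xs] /orP[/eqP->|ys]; rewrite ?eqxx //.
- by move=> _; apply: az.
- by move=> _; rewrite rs; apply: az.
- by apply: IH.
Qed.

Section Geom.
Variable R : realType.
Variable n : nat.
Implicit Types x y th : 'M[R]_(1, n).

Lemma edistC x y : edist x y = edist y x.
Proof. by rewrite /edist; congr Num.sqrt; apply: eq_bigr => i _; rewrite -sqrrN opprB. Qed.

Lemma edist_ge0 x y : 0 <= edist x y.
Proof. exact: sqrtr_ge0. Qed.

Lemma edist_coord x y i : `|x ord0 i - y ord0 i| <= edist x y.
Proof.
rewrite /edist -sqrtr_sqr ler_sqrt; last by apply: sumr_ge0 => j _; exact: sqr_ge0.
by rewrite (bigD1 i) //= lerDl; apply: sumr_ge0 => j _; exact: sqr_ge0.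
Qed.

Lemma edist_shrink t x y th :
  edist (t *: x + (1 - t) *: th) (t *: y + (1 - t) *: th) = `|t| * edist x y.
Proof.
rewrite /edist -sqrtr_sqr -sqrtrM ?sqr_ge0 //; congr Num.sqrt.
rewrite mulr_sumr; apply: eq_bigr => i _; rewrite !mxE -exprMn; congr (_ ^+ 2); ring.
Qed.

Lemma edist_shrink0 t x th :
  edist th (t *: x + (1 - t) *: th) = `|t| * edist th x.
Proof.
rewrite /edist -sqrtr_sqr -sqrtrM ?sqr_ge0 //; congr Num.sqrt.
rewrite mulr_sumr; apply: eq_bigr => i _; rewrite !mxE -exprMn; congr (_ ^+ 2); ring.
Qed.


Lemma packing_shrink (K : set 'M[R]_(1, n)) (c e e' : R) th s :
  convex_set K -> K th -> 0 < e -> e <= e' ->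
  packing_set (e' / c) (eball th e' `&` K) s ->
  packing_set (e / c) (eball th e `&` K)
     (map (fun x => (e / e') *: x + (1 - e / e') *: th) s).
Proof.
move=> cK Kth e0 ee' [us [ins ps]].
have e'0 : 0 < e' by apply: lt_le_trans ee'.
set t := e / e'.
have t0 : 0 < t by rewrite divr_gt0.
have t1 : t <= 1 by rewrite ler_pdivrMr // mul1r.
have tee : t * e' = e by rewrite /t divfK // gt_eqF.
split; [|split].
- rewrite map_inj_uniq // => x y /(congr1 (fun z => z - (1 - t) *: th)).
  rewrite !addrK => /(congr1 (fun z => t^-1 *: z)).
  by rewrite !scalerA mulVf ?gt_eqF // !scale1r.
- move=> z /mapP [x xs ->]; have [bx Kx] := ins x xs; split.
    rewrite /eball /= edist_shrink0 gtr0_norm // -tee ler_pM2l //.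
  by apply: cK => //; exact: ltW.
- rewrite pairwise_map; apply: sub_pairwise ps => x y /= H.
  by rewrite edist_shrink gtr0_norm // -tee -mulrA ltr_pM2l.
Qed.


Definition gridN (c : R) : nat := (Num.truncn (2 * c * n.+1%:R)).+1 ^ n.

Lemma packing_size_bound (K : set 'M[R]_(1, n)) (c e : R) th s :
  0 < c -> 0 < e -> packing_set (e / c) (eball th e `&` K) s ->
  (size s <= gridN c)%N.
Proof.
move=> c0 e0 [us [ins ps]].
set m : R := n.+1%:R.
have m0 : 0 < m by rewrite ltr0n.
set a := e / c.
have a0 : 0 < a by rewrite divr_gt0.
set h := a / m.
have h0 : 0 < h by rewrite divr_gt0.
set B := Num.truncn (2 * c * m).
pose u (x : 'M[R]_(1, n)) i := (x ord0 i - th ord0 i + e) / h.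
pose idx (x : 'M[R]_(1, n)) := [ffun i : 'I_n => (inord (Num.truncn (u x i)) : 'I_B.+1)].
have key : forall x, x \in s -> forall i, 0 <= u x i /\ (Num.truncn (u x i) <= B)%N.
  move=> x xs i; have [bx _] := ins x xs.
  have := le_trans (edist_coord th x i) bx; rewrite ler_norml => /andP[H1 H2].
  have Ex : x ord0 i - th ord0 i + e = e - (th ord0 i - x ord0 i) by ring.
  split; first by apply: divr_ge0; [rewrite Ex subr_ge0 | exact: ltW].
  apply: le_truncn; rewrite /u ler_pdivrMr //.
  have -> : 2 * c * m * h = 2 * e by rewrite /h /a; field; rewrite ?gt_eqF.
  lra.
have inj : {in s &, injective idx}.
  move=> x y xs ys E; apply/eqP; apply/negPn/negP => nxy.
  have sym : symmetric (fun x y : 'M[R]_(1, n) => e / c < edist x y).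
    by move=> ? ?; rewrite edistC.
  have := pairwise_sym sym ps xs ys nxy.
  apply/negP; rewrite -leNgt.
  have Hi : forall i, (x ord0 i - y ord0 i) ^+ 2 <= h ^+ 2.
    move=> i; have := congr1 (fun f : {ffun 'I_n -> 'I_B.+1} => val (f i)) E; rewrite !ffunE /=.
    have [ux bx] := key x xs i; have [uy by'] := key y ys i.
    rewrite !inordK ?ltnS // => Et.
    have [lx hx] := andP (truncn_itv ux); have [ly hy] := andP (truncn_itv uy).
    rewrite Et in lx hx.
    have d1 : u x i - u y i < 1 by lra.
    have d2 : u y i - u x i < 1 by lra.
    have -> : x ord0 i - y ord0 i = h * (u x i - u y i).
      by rewrite /u; field; rewrite gt_eqF.
    rewrite exprMn -[X in _ <= X]mulr1 ler_pM2l ?exprn_gt0 //.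
    nra.
  rewrite /edist; apply: ltW.
  rewrite -[X in _ < X](@gtr0_norm _ a) // -sqrtr_sqr ltr_sqrt ?exprn_gt0 //.
  apply: le_lt_trans (_ : \sum_(i < n) h ^+ 2 < _); first by apply: ler_sum => i _.
  rewrite sumr_const card_ord -mulr_natr.
  have ha : a = h * m by rewrite /h divfK ?gt_eqF.
  have hm : h ^+ 2 * n%:R < (h * m) ^+ 2.
    rewrite [X in _ < X]exprMn ltr_pM2l ?exprn_gt0 // /m expr2 -natrM ltr_nat.
    by rewrite mulSn ltnS leq_addr.
  by rewrite ha.
have := max_card (mem (map idx s)).
rewrite card_ffun !card_ord -/(gridN c).
have u2 : uniq (map idx s) by rewrite map_inj_in_uniq.
by rewrite (card_uniqP u2) size_map.
Qed.

End Geom.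

Section Mloc.
Variable R : realType.
Variable n : nat.
Variable K : set 'M[R]_(1, n).
Variable c : R.
Hypothesis c0 : 0 < c.
Hypothesis cK : convex_set K.

Let P (e : R) th := [set ((size s)%:R : R) | s in packing_set (e / c) (eball th e `&` K)].

Lemma packing_nil (eta : R) (T : set 'M[R]_(1, n)) : packing_set eta T [::].
Proof. by split=> //; split. Qed.

Lemma P_has_sup e th : 0 < e -> has_sup (P e th).
Proof.
move=> e0; split; first by exists 0; exists [::] => //; exact: packing_nil.
exists (gridN n c)%:R => _ [s ps <-]; rewrite ler_nat.
exact: packing_size_bound ps.
Qed.

Lemma packingM_le e th : 0 < e -> packingM (e / c) (eball th e `&` K) <= (gridN n c)%:R.
Proof.
move=> e0; apply: ge_sup; first by exists 0; exists [::] => //; exact: packing_nil.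
move=> _ [s ps <-]; rewrite ler_nat; exact: packing_size_bound ps.
Qed.

Lemma packingM_ge1 e th : 0 < e -> K th -> 1 <= packingM (e / c) (eball th e `&` K).
Proof.
move=> e0 Kth; apply: sup_upper_bound; first exact: P_has_sup.
exists [:: th] => //; split=> //; split=> // x; rewrite inE => /eqP ->; split=> //.
rewrite /eball /= /edist.
have -> : \sum_(i < n) (th ord0 i - th ord0 i) ^+ 2 = 0.
  by apply: big1 => i _; rewrite subrr expr0n.
by rewrite sqrtr0 ltW.
Qed.

Lemma packingM_mono e e' th : 0 < e -> e <= e' -> K th ->
  packingM (e' / c) (eball th e' `&` K) <= packingM (e / c) (eball th e `&` K).
Proof.
move=> e0 ee' Kth; apply: ge_sup; first by exists 0; exists [::] => //; exact: packing_nil.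
move=> _ [s ps <-]; apply: sup_upper_bound; first exact: P_has_sup.
exists (map (fun x => (e / e') *: x + (1 - e / e') *: th) s); last by rewrite size_map.
exact: packing_shrink.
Qed.

Let Q e := [set packingM (e / c) (eball th e `&` K) | th in K].

Lemma Q_has_sup e : 0 < e -> K !=set0 -> has_sup (Q e).
Proof.
move=> e0 [th Kth]; split; first by exists (packingM (e / c) (eball th e `&` K)); exists th.
by exists (gridN n c)%:R => _ [t Kt <-]; exact: packingM_le.
Qed.

Lemma Mloc_mono e e' : 0 < e -> e <= e' -> Mloc c K e' <= Mloc c K e.
Proof.
move=> e0 ee'; have e'0 : 0 < e' by apply: lt_le_trans ee'.
have [[th Kth]|K0] := pselect (K !=set0); last first.
  have QE x : Q x = set0.
    by apply/seteqP; split=> // y [t Kt _]; apply: K0; exists t.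
  by rewrite /Mloc -/(Q e) -/(Q e') !QE.
apply: ge_sup; first by exists (packingM (e' / c) (eball th e' `&` K)); exists th.
move=> _ [t Kt <-]; apply: le_trans (packingM_mono e0 ee' Kt) _.
apply: sup_upper_bound; first by apply: Q_has_sup; [|exists th].
by exists t.
Qed.

Lemma Mloc_ge1 e : 0 < e -> K !=set0 -> 1 <= Mloc c K e.
Proof.
move=> e0 [th Kth]; apply: le_trans (packingM_ge1 e0 Kth) _.
apply: sup_upper_bound; first by apply: Q_has_sup; [|exists th].
by exists th.
Qed.

Lemma lnMloc_mono x y : 0 < x -> x <= y -> ln (Mloc c K y) <= ln (Mloc c K x).
Proof.
move=> x0 xy; have y0 : 0 < y by apply: lt_le_trans xy.
have [KK|K0] := pselect (K !=set0).
  rewrite ler_ln ?posrE ?(lt_le_trans ltr01) ?Mloc_ge1 //.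
  exact: Mloc_mono.
have QE z : Q z = set0.
  by apply/seteqP; split=> // w [t Kt _]; apply: K0; exists t.
by rewrite /Mloc -/(Q x) -/(Q y) !QE.
Qed.

End Mloc.

From mathcomp Require Import all_analysis.

Lemma convex_of (R : realType) (n : nat) (K : set 'M[R]_(1, n)) :
  convex_set K -> Pilot.Defs.convex_set K.
Proof.
move=> cK x y Kx Ky t t0 t1.
have := cK x y (Itv01 t0 t1) (mem_set Kx) (mem_set Ky).
by rewrite inE.
Qed.

Theorem mainTheorem15 (R : realType) :
  exists c0 : R, forall cstar : R, c0 <= cstar ->
  forall C1 C2 : R, 0 < C1 -> 0 < C2 ->
  exists c C : R, 0 < c /\ 0 < C /\
  forall (n : nat) (K : set 'M[R]_(1, n)) (sigma : R),
    closed_set K -> convex_set K -> 0 < sigma ->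
    c * eps_star cstar K sigma <= eps_dagger cstar K sigma C1 C2 /\
    eps_dagger cstar K sigma C1 C2 <= C * eps_star cstar K sigma.
Proof.
exists 1 => cstar hc C1 C2 C10 C20.
have cs0 : 0 < cstar by apply: lt_le_trans hc.
have T1 := t1_gt0 C10 C20; have T2 := t2_gt0 C10 C20.
exists (t1 C1 C2), (t2 C1 C2)^-1; split=> //; split; first by rewrite invr_gt0.
move=> n K sigma _ /convex_of cK s0.
pose f := fun e => ln (Mloc cstar K e).
have mono : forall x y, 0 < x -> x <= y -> f y <= f x.
  by move=> x y x0 xy; apply: lnMloc_mono.
have Estar : eps_star cstar K sigma = sup (epsset f sigma 1 1).
  rewrite /eps_star; congr sup; apply/seteqP; split=> e [H1 H2]; split=> //.
    by rewrite !mul1r.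
  by move: H2; rewrite !mul1r.
have Edag : eps_dagger cstar K sigma C1 C2 = sup (epsset f sigma C1 C2) by [].
rewrite Estar Edag; split; first exact: compare1.
rewrite -(ler_pM2l T2) mulrA mulfV ?gt_eqF // mul1r.
exact: compare2.
Qed.
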